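(* In the two-source model of the context, define the (randomized) query scheme in which, for every $t$, $Q_t$ depends only on $(U_t,X_t,S_t)$ and, given $U_t=u$ and $X_t=x$, $$P(Q_t=\{x\}\mid U_t=u,X_t=x)=\frac{\pi_t(x)}{p(x\mid u)},\qquad P(Q_t=\{A,B\}\mid U_t=u,X_t=x)=1-\frac{\pi_t(x)}{p(x\mid u)},$$ and $P(Q_t=\{\bar x\}\mid U_t=u,X_t=x)=0$ where $\bar x$ is the other source. (This is implementable since $U_t$ only involves $X_{F^-(t)}$ and $X_{t+1}$ and $\omega\ge1$.) Then for every $t$: the scheme is decodable; $P(|Q_t|=1)=\pi_t(A)+\pi_t(B)$, so $\mathbb E|Q_t|=2-\pi_t(A)-\pi_t(B)$; $I(U_t;Q_0,\dots,Q_t)=0$; and the privacy constraint $I(X_{\mathcal B_t};Q_0,\dots,Q_t)=0$ holds.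
   Context: Model. There are $N=2$ sources, $\mathcal N=\{A,B\}$. The user's requests $X_t\in\{A,B\}$, $t\ge0$, form a time-homogeneous Markov chain with transition matrix $M$. Privacy modes $F_t\in\{\mathrm{ON},\mathrm{OFF}\}$ form a known sequence with $F_0=\mathrm{ON}$. Local randomness $S_0,S_1,\dots$ is mutually independent and independent of the requests. Queries $Q_t$ take values in $\{\{A\},\{B\},\{A,B\}\}$; decodability means $X_t\in Q_t$. Privacy: $I(X_{\mathcal B_t};Q_0,\dots,Q_t)=0$ with $\mathcal B_t=\{i\le t: F_i=\mathrm{ON}\}\cup\{i: i\ge t+1\}$. Notation. $F^-(t)=\max\{i\le t: F_i=\mathrm{ON}\}$, $U_t=(X_{F^-(t)},X_{t+1})$, $p(x\mid u)=P(X_t=x\mid U_t=u)$ (computable from powers of $M$), and $\pi_t(x)=\min_u p(x\mid u)$ over $u\in\{A,B\}^2$ with $P(U_t=u)>0$. *)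

(* Defs.v *)
From HB Require Import structures.
From mathcomp Require Import all_boot.
From Stdlib Require Import Reals.

Set Implicit Arguments.
Unset Strict Implicit.
Unset Printing Implicit Defensive.

Definition src := bool.
Definition A : src := true.
Definition B : src := false.

(* Queries: Some x = {x}, None = {A,B}. *)
Definition query := option src.
Definition in_query (x : src) (q : query) : bool :=
  match q with Some y => y == x | None => true end.
Definition qsize (q : query) : nat :=
  match q with Some _ => 1 | None => 2 end.

Definition rsum (T : finType) (f : T -> R) : R := \big[Rplus/0%R]_(i : T) f i.

Definition pathprob (mu : src -> R) (M : src -> src -> R) (m : nat)
  (x : (m.+1).-tuple src) : R :=
  Rmult (mu (nth A x 0))
        (\big[Rmult/1%R]_(i < m) M (nth A x i) (nth A x i.+1)).

(* F^-(t) = max {i <= t : F_i = ON}  (with F_0 = ON) *)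
Fixpoint Fminus (F : nat -> bool) (t : nat) : nat :=
  match t with
  | 0 => 0
  | t'.+1 => if F t'.+1 then t'.+1 else Fminus F t'
  end.

Definition Uof (F : nat -> bool) (t : nat) (x : seq src) : src * src :=
  (nth A x (Fminus F t), nth A x t.+1).

Definition PU mu M F (t : nat) (u : src * src) : R :=
  rsum (fun x : (t.+2).-tuple src =>
          if Uof F t x == u then pathprob mu M x else 0%R).

Definition PXU mu M F (t : nat) (x0 : src) (u : src * src) : R :=
  rsum (fun x : (t.+2).-tuple src =>
          if (Uof F t x == u) && (nth A x t == x0) then pathprob mu M x else 0%R).

Definition pcond mu M F t (x : src) (u : src * src) : R :=
  Rdiv (PXU mu M F t x u) (PU mu M F t u).

Definition all_u : seq (src * src) := [:: (A, A); (A, B); (B, A); (B, B)].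

(* pi_t(x) = min over u with P(U_t = u) > 0 of p(x | u) *)
Definition pi_t mu M F t (x : src) : R :=
  match foldr (fun u acc =>
                 if Rlt_dec 0 (PU mu M F t u)
                 then Some (match acc with
                            | None => pcond mu M F t x u
                            | Some m => Rmin (pcond mu M F t x u) m end)
                 else acc) None all_u with
  | Some m => m
  | None => 0%R
  end.

Definition kern mu M F t (u : src * src) (x : src) (q : query) : R :=
  match q with
  | Some y => if y == x then Rdiv (pi_t mu M F t x) (pcond mu M F t x u) else 0%R
  | None => Rminus 1 (Rdiv (pi_t mu M F t x) (pcond mu M F t x u))
  end.

(* Joint outcome of (X_0..X_n) and (Q_0..Q_t); Q_s depends only on
   (U_s, X_s, S_s) with independent local randomness, so the joint law is
   the path probability times the product of the kernels. *)
Definition Omega (n t : nat) : finType :=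
  ((n.+1).-tuple src * (t.+1).-tuple query)%type.

Definition Pjoint mu M F (n t : nat) (w : Omega n t) : R :=
  Rmult (pathprob mu M w.1)
        (\big[Rmult/1%R]_(s < t.+1)
            kern mu M F s (Uof F s w.1) (nth A w.1 s) (nth None w.2 s)).

Definition pr (T : finType) (P : T -> R) (E : pred T) : R :=
  rsum (fun w => if E w then P w else 0%R).
Definition expect (T : finType) (P : T -> R) (f : T -> R) : R :=
  rsum (fun w => Rmult (P w) (f w)).

(* mutual information I(f; g) under P (convention 0 log 0 = 0) *)
Definition MI (T T1 T2 : finType) (P : T -> R) (f : T -> T1) (g : T -> T2) : R :=
  rsum (fun a : T1 => rsum (fun b : T2 =>
    let pab := pr P (fun w => (f w == a) && (g w == b)) in
    let pa := pr P (fun w => f w == a) in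
    let pb := pr P (fun w => g w == b) in
    if Rlt_dec 0 pab then Rmult pab (ln (Rdiv pab (Rmult pa pb))) else 0%R)).

Definition inB (F : nat -> bool) (t i : nat) : bool :=
  ((i <= t)%N && F i) || (t < i)%N.

(* X_{B_t} restricted to indices <= n (non-B coordinates masked out) *)
Definition XB (F : nat -> bool) (n t : nat) (x : (n.+1).-tuple src)
  : {ffun 'I_n.+1 -> option src} :=
  [ffun i : 'I_n.+1 => if inB F t i then Some (nth A x i) else None].

(* Main.v *)
Require Import Defs.
From HB Require Import structures.
From mathcomp Require Import all_boot.
From Stdlib Require Import Reals Lra Lia.
From mathcomp Require Import Rstruct zify.

Set Implicit Arguments.
Unset Strict Implicit.
Unset Printing Implicit Defensive.

Local Open Scope R_scope.



Definition tsum (T : finType) (k : nat) (f : seq T -> R) : R :=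
  \big[Rplus/0]_(x : k.-tuple T) f x.

Lemma tsum0 (T : finType) (f : seq T -> R) : tsum 0 f = f [::].
Proof.
rewrite /tsum (eq_bigr (fun _ => f [::])); last by move=> x _; rewrite (tuple0 x).
rewrite big_const card_tuple expn0 /=; lra.
Qed.

Lemma tsum_cons (T : finType) k (f : seq T -> R) :
  tsum k.+1 f = \big[Rplus/0]_(a : T) tsum k (fun s => f (a :: s)).
Proof.
rewrite /tsum (reindex (fun p : T * k.-tuple T => [tuple of p.1 :: p.2])) /=.
  by rewrite -(pair_bigA _ (fun a (s : k.-tuple T) => f (a :: s))).
exists (fun y : k.+1.-tuple T => (thead y, [tuple of behead y])).
  by move=> [a s] _; congr pair; apply: val_inj.
move=> y _; apply: val_inj => /=.
by case: y => [[|a s] //= _].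
Qed.

Lemma tsum_rcons (T : finType) k (f : seq T -> R) :
  tsum k.+1 f = tsum k (fun s => \big[Rplus/0]_(a : T) f (rcons s a)).
Proof.
rewrite /tsum (reindex (fun p : k.-tuple T * T => [tuple of rcons p.1 p.2])) /=.
  by rewrite -(pair_bigA _ (fun (s : k.-tuple T) a => f (rcons s a))).
exists (fun y : k.+1.-tuple T => ([tuple of belast (thead y) (behead y)], last (thead y) (behead y))).
  move=> [s a] _; rewrite /=; congr pair.
    apply: val_inj => /=.
    case: s => [[|b s] /= Hs]; first by [].
    by rewrite belast_rcons.
  case: s => [[|b s] /= Hs]; first by [].
  by rewrite last_rcons.
move=> y _; apply: val_inj => /=.
by rewrite -lastI; exact: (congr1 val (esym (tuple_eta y))).
Qed.


Lemma sum_bool (F : bool -> R) : \big[Rplus/0]_(a : bool) F a = F true + F false.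
Proof. by rewrite big_bool. Qed.

Definition pp (mu : src -> R) (M : src -> src -> R) (l : seq src) : R :=
  mu (nth A l 0) * \big[Rmult/1]_(i < (size l).-1) M (nth A l i) (nth A l i.+1).

Lemma pathprobE mu M m (x : m.+1.-tuple src) : pathprob mu M x = pp mu M x.
Proof. by rewrite /pathprob /pp size_tuple. Qed.

Lemma pp_ge0 mu M (Hmu0 : forall x, 0 <= mu x) (HM0 : forall x y, 0 <= M x y) l :
  0 <= pp mu M l.
Proof.
rewrite /pp; apply: Rmult_le_pos => //.
apply: (big_ind (fun x => 0 <= x)) => //; first lra.
by move=> x y; apply: Rmult_le_pos.
Qed.

Lemma pp_rcons mu M (s : seq src) (a : src) : (0 < size s)%nat ->
  pp mu M (rcons s a) = pp mu M s * M (nth A s (size s).-1) a.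
Proof.
move=> Hs; have [k Hk] : exists k, size s = k.+1.
  by case: (size s) Hs => [//|k] _; exists k.
rewrite /pp size_rcons Hk /= nth_rcons Hk /=.
rewrite big_ord_recr /= Rmult_assoc; congr (_ * (_ * _)).
  apply: eq_bigr => i _; rewrite !nth_rcons Hk /=.
  by rewrite (ltn_trans (ltn_ord i)) // ltnS (ltn_ord i).
by rewrite !nth_rcons Hk ltnSn ltnn eqxx.
Qed.

Lemma marg1 mu M (HM1 : forall x, M x A + M x B = 1) k (f : seq src -> R) :
  (forall s a, size s = k.+1 -> f (rcons s a) = f s) ->
  tsum k.+2 (fun l => pp mu M l * f l) = tsum k.+1 (fun l => pp mu M l * f l).
Proof.
move=> Hf; rewrite tsum_rcons /tsum; apply: eq_bigr => x _.
have Hs : size x = k.+1 by rewrite size_tuple.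
rewrite sum_bool /= !pp_rcons ?Hs // !Hf //.
have := HM1 (nth A x k); rewrite /A /B => H.
rewrite [k.+1.-1]/=.
move: H; set P := pp mu M _; set Q := f _; set m1 := M _ true; set m2 := M _ false.
move=> H; rewrite -[X in _ = X]Rmult_1_r -H; ring.
Qed.

Lemma marg mu M (HM1 : forall x, M x A + M x B = 1) N k (f : seq src -> R) :
  (k <= N)%nat ->
  (forall s, (k.+1 <= size s)%nat -> f s = f (take k.+1 s)) ->
  tsum N.+1 (fun l => pp mu M l * f l) = tsum k.+1 (fun l => pp mu M l * f l).
Proof.
move=> HkN Hf; elim: N HkN => [|N IH] HkN.
  by move: HkN; rewrite leqn0 => /eqP Hk; subst k.
rewrite leq_eqVlt in HkN; case/orP: HkN => [/eqP -> //|HkN].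
rewrite marg1 //; first by apply: IH.
move=> s a Hs; rewrite (Hf (rcons s a)) ?size_rcons ?Hs; last by apply: ltnW.
rewrite (Hf s) ?Hs //.
by rewrite -cats1 takel_cat ?Hs.
Qed.

Lemma tsum_ptot mu M (Hmu1 : mu A + mu B = 1) : tsum 1 (pp mu M) = 1.
Proof.
rewrite tsum_cons sum_bool /= !tsum0 /pp /= !big_ord0.
rewrite /A /B in Hmu1; lra.
Qed.


Lemma Fm_le F J : (Fminus F J <= J)%nat.
Proof.
elim: J => [//|J IH] /=; case: (F J.+1) => //; exact: leq_trans IH _.
Qed.

Lemma Fm_on F (HF0 : F 0%nat = true) J : F (Fminus F J) = true.
Proof. elim: J => [//|J IH] /=; by case E: (F J.+1). Qed.

Lemma Fm_off F J i : (Fminus F J < i)%nat -> (i <= J)%nat -> F i = false.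
Proof.
elim: J i => [|J IH] i /=; first by case: i.
case E: (F J.+1) => H1 H2; first by rewrite ltnNge H2 in H1.
rewrite leq_eqVlt in H2; case/orP: H2 => [/eqP -> //|H2].
by apply: IH.
Qed.

Lemma Fm_eq F J : F J = true -> Fminus F J = J.
Proof. by case: J => [//|J] /= ->. Qed.

Lemma Fm_S F J : F J.+1 = false -> Fminus F J.+1 = Fminus F J.
Proof. by move=> /= ->. Qed.

Lemma PU_ge0 mu M F (Hmu0 : forall x, 0 <= mu x) (HM0 : forall x y, 0 <= M x y) t u :
  0 <= PU mu M F t u.
Proof.
rewrite /PU /rsum; apply: (big_ind (fun x => 0 <= x)) => //; first lra.
  by move=> *; lra.
move=> x _; case: ifP => _; last lra.
rewrite pathprobE; exact: pp_ge0.
Qed.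

Lemma PXU_ge0 mu M F (Hmu0 : forall x, 0 <= mu x) (HM0 : forall x y, 0 <= M x y) t z u :
  0 <= PXU mu M F t z u.
Proof.
rewrite /PXU /rsum; apply: (big_ind (fun x => 0 <= x)) => //; first lra.
  by move=> *; lra.
move=> x _; case: ifP => _; last lra.
rewrite pathprobE; exact: pp_ge0.
Qed.

Lemma PXU_sum mu M F t u :
  PXU mu M F t A u + PXU mu M F t B u = PU mu M F t u.
Proof.
rewrite /PXU /PU /rsum -big_split /=; apply: eq_bigr => x _.
case: (Uof F t x == u) => /=; last lra.
by case: (nth A x t) => /=; rewrite /A /B /=; lra.
Qed.

Lemma Rdiv0r x : Rdiv x 0 = 0.
Proof. by rewrite /Rdiv Rinv_0 Rmult_0_r. Qed.

Lemma pcond_ge0 mu M F (Hmu0 : forall x, 0 <= mu x) (HM0 : forall x y, 0 <= M x y) t z u :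
  0 <= pcond mu M F t z u.
Proof.
rewrite /pcond; have := @PU_ge0 mu M F Hmu0 HM0 t u; have := @PXU_ge0 mu M F Hmu0 HM0 t z u.
move=> H1 H2; case: (Req_dec (PU mu M F t u) 0) => H3.
  by rewrite H3 Rdiv0r; lra.
apply: Rmult_le_pos => //; apply: Rlt_le; apply: Rinv_0_lt_compat; lra.
Qed.

Lemma pcond_sum mu M F t u : 0 < PU mu M F t u ->
  pcond mu M F t A u + pcond mu M F t B u = 1.
Proof.
move=> H; rewrite /pcond -PXU_sum; field; have := PXU_sum mu M F t u; lra.
Qed.

Definition foldpi mu M F t x l :=
  foldr (fun u acc =>
                 if Rlt_dec 0 (PU mu M F t u)
                 then Some (match acc with
                            | None => pcond mu M F t x u
                            | Some m => Rmin (pcond mu M F t x u) m end)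
                 else acc) None l.

Lemma foldpiP mu M F (Hmu0 : forall x, 0 <= mu x) (HM0 : forall x y, 0 <= M x y) t x l :
  match foldpi mu M F t x l with
  | Some m => 0 <= m /\ forall u, u \in l -> 0 < PU mu M F t u -> m <= pcond mu M F t x u
  | None => forall u, u \in l -> ~ 0 < PU mu M F t u
  end.
Proof.
elim: l => [//|v l IH] /=.
case: Rlt_dec => Hv.
  case E: (foldpi mu M F t x l) IH => [m|] IH /=.
    case: IH => [Hm IH]; split.
      apply: Rmin_glb => //; exact: pcond_ge0.
    move=> u; rewrite in_cons => /orP [/eqP -> _|Hu HPu].
      exact: Rmin_l.
    apply: Rle_trans (Rmin_r _ _) (IH u Hu HPu).
  split; first exact: pcond_ge0.
  move=> u; rewrite in_cons => /orP [/eqP -> _|Hu HPu]; first lra.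
  by case: (IH u Hu).
rewrite -/(foldpi mu M F t x l).
case E: (foldpi mu M F t x l) IH => [m|] IH /=.
  case: IH => [Hm IH]; split => // u; rewrite in_cons => /orP [/eqP -> //|Hu HPu].
  exact: IH.
move=> u; rewrite in_cons => /orP [/eqP -> //|Hu]; exact: IH.
Qed.

Lemma in_all_u (u : src * src) : u \in all_u.
Proof. by case: u => [[] []]. Qed.

Lemma pi_ge0 mu M F (Hmu0 : forall x, 0 <= mu x) (HM0 : forall x y, 0 <= M x y) t x :
  0 <= pi_t mu M F t x.
Proof.
have := @foldpiP mu M F Hmu0 HM0 t x all_u; rewrite /pi_t -/(foldpi mu M F t x all_u).
case: (foldpi mu M F t x all_u) => [m [] //|_]; lra.
Qed.

Lemma pi_le mu M F (Hmu0 : forall x, 0 <= mu x) (HM0 : forall x y, 0 <= M x y) t x u :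
  0 < PU mu M F t u -> pi_t mu M F t x <= pcond mu M F t x u.
Proof.
move=> Hu; have := @foldpiP mu M F Hmu0 HM0 t x all_u; rewrite /pi_t -/(foldpi mu M F t x all_u).
case: (foldpi mu M F t x all_u) => [m [] _ H|H]; first exact: H (in_all_u u) Hu.
by case: (H u (in_all_u u)).
Qed.

Definition eq_ mu M F t (q : query) : R :=
  match q with
  | Some y => pi_t mu M F t y
  | None => 1 - pi_t mu M F t A - pi_t mu M F t B
  end.

Lemma cancel_pi p r : 0 <= r <= p -> p * Rdiv r p = r.
Proof.
move=> [H1 H2]; case: (Req_dec p 0) => Hp.
  by rewrite Hp; lra.
by field.
Qed.

Lemma kern_lemma mu M F (Hmu0 : forall x, 0 <= mu x) (HM0 : forall x y, 0 <= M x y) t u q :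
  0 < PU mu M F t u ->
  pcond mu M F t A u * kern mu M F t u A q + pcond mu M F t B u * kern mu M F t u B q
  = eq_ mu M F t q.
Proof.
move=> Hu.
have HA := cancel_pi (conj (@pi_ge0 mu M F Hmu0 HM0 t A) (@pi_le mu M F Hmu0 HM0 t A u Hu)).
have HB := cancel_pi (conj (@pi_ge0 mu M F Hmu0 HM0 t B) (@pi_le mu M F Hmu0 HM0 t B u Hu)).
have Hs := pcond_sum Hu.
case: q => [[]|] /=; rewrite /A /B /= in HA HB Hs *.
- rewrite HA; lra.
- rewrite HB; lra.
- rewrite !Rmult_minus_distr_l HA HB; lra.
Qed.


Definition swps (m e : nat) (x w : seq src) : seq src :=
  [seq (if (m < i < e)%nat then nth A w i else nth A x i) | i <- iota 0 (size x)].

Lemma size_swps m e x w : size (swps m e x w) = size x.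
Proof. by rewrite /swps size_map size_iota. Qed.

Lemma nth_swps m e x w i : nth A (swps m e x w) i =
  if (i < size x)%nat then (if (m < i < e)%nat then nth A w i else nth A x i) else A.
Proof.
rewrite /swps; case: ltnP => Hi.
  by rewrite (nth_map 0%nat) ?size_iota // nth_iota.
by rewrite nth_default // size_map size_iota.
Qed.

Lemma swpsK m e x w : (e <= size w)%nat -> swps m e (swps m e x w) (swps m e w x) = x.
Proof.
move=> Hw; apply: (@eq_from_nth _ A); rewrite ?size_swps // => i Hi.
rewrite nth_swps size_swps Hi !nth_swps Hi.
case: (boolP (m < i < e)%nat) => H //.
by rewrite (_ : (i < size w)%nat = true) //; lia.
Qed.

Lemma prod_if (N : nat) (c : nat -> bool) (a b : nat -> R) :
  \big[Rmult/1]_(i < N) (if c i then a i else b i) =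
  \big[Rmult/1]_(i < N | c i) a i * \big[Rmult/1]_(i < N | ~~ c i) b i.
Proof.
rewrite (bigID (fun i : 'I_N => c i)) /=; congr (_ * _); apply: eq_bigr => i.
  by move=> ->.
by move/negPf=> ->.
Qed.

Lemma prod_seg (N e m : nat) (f : nat -> R) : (e <= N)%nat ->
  \big[Rmult/1]_(i < N | (m <= i < e)%nat) f i = \big[Rmult/1]_(i < e | (m <= i < e)%nat) f i.
Proof.
move=> H; rewrite (big_ord_widen_cond N (fun i => (m <= i < e)%nat) f H).
by apply: eq_bigl => i /=; case H2: (m <= i < e)%nat => //=; move/andP: H2 => [_ ->].
Qed.

Definition ed (M : src -> src -> R) (x : seq src) (i : nat) := M (nth A x i) (nth A x i.+1).

Lemma ed_swps M m e x w i : (m < e)%nat -> (e < size x)%nat -> (e < size w)%nat ->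
  nth A x m = nth A w m -> nth A x e = nth A w e -> (i.+1 < size x)%nat ->
  ed M (swps m e x w) i = if (m <= i < e)%nat then ed M w i else ed M x i.
Proof.
move=> Hme Hex Hew Hm He Hi; rewrite /ed !nth_swps Hi (ltn_trans (ltnSn i) Hi).
case: (ltngtP m i) => Hmi /=.
- rewrite (_ : (m < i.+1)%nat = true) /=; last by lia.
  case: (ltnP i e) => Hie.
    case: (ltngtP i.+1 e) => Hie2 /=; [by [] | lia | by rewrite -Hie2 in He; rewrite He].
  by rewrite (_ : (i.+1 < e)%nat = false); last by lia.
- by rewrite (_ : (m < i.+1 < e)%nat = false); last by lia.
- subst i; rewrite ltnSn Hme /= Hm.
  case: (ltngtP m.+1 e) => Hie /=; [by [] | lia | by rewrite -Hie in He; rewrite He].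
Qed.

Lemma prod_split (N : nat) (c : nat -> bool) (a : nat -> R) :
  \big[Rmult/1]_(i < N) a i =
  \big[Rmult/1]_(i < N | c i) a i * \big[Rmult/1]_(i < N | ~~ c i) a i.
Proof. by rewrite (bigID (fun i : 'I_N => c i)). Qed.

Lemma pp_swap mu M m e x w : (m < e)%nat -> (e < size x)%nat -> (e < size w)%nat ->
  nth A x m = nth A w m -> nth A x e = nth A w e ->
  pp mu M (swps m e x w) * pp mu M (swps m e w x) = pp mu M x * pp mu M w.
Proof.
move=> Hme Hex Hew Hm He.
have H0 : forall y z, (0 < size y)%nat -> nth A (swps m e y z) 0 = nth A y 0.
  by move=> y z Hy; rewrite nth_swps Hy.
have Hprod : forall y z, (e < size y)%nat -> (e < size z)%nat ->
    nth A y m = nth A z m -> nth A y e = nth A z e ->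
    \big[Rmult/1]_(i < (size y).-1) ed M (swps m e y z) i =
    \big[Rmult/1]_(i < e | (m <= i < e)%nat) ed M z i *
    \big[Rmult/1]_(i < (size y).-1 | ~~ (m <= i < e)%nat) ed M y i.
  move=> y z Hy Hz Hyz1 Hyz2.
  rewrite (eq_bigr (fun i : 'I_(size y).-1 =>
       if (m <= i < e)%nat then ed M z i else ed M y i)); last first.
    move=> i _; apply: ed_swps => //.
    by have := ltn_ord i; lia.
  rewrite (prod_if _ (fun i => (m <= i < e)%nat) (ed M z) (ed M y)) prod_seg //; lia.
have Hsplit : forall y, (e < size y)%nat ->
    \big[Rmult/1]_(i < (size y).-1) ed M y i =
    \big[Rmult/1]_(i < e | (m <= i < e)%nat) ed M y i *
    \big[Rmult/1]_(i < (size y).-1 | ~~ (m <= i < e)%nat) ed M y i.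
  move=> y Hy; rewrite (prod_split _ (fun i => (m <= i < e)%nat)) prod_seg //; lia.
have Ex : pp mu M x = mu (nth A x 0) * \big[Rmult/1]_(i < (size x).-1) ed M x i by [].
have Ew : pp mu M w = mu (nth A w 0) * \big[Rmult/1]_(i < (size w).-1) ed M w i by [].
have Ex' : pp mu M (swps m e x w) = mu (nth A (swps m e x w) 0) *
   \big[Rmult/1]_(i < (size x).-1) ed M (swps m e x w) i by rewrite /pp size_swps.
have Ew' : pp mu M (swps m e w x) = mu (nth A (swps m e w x) 0) *
   \big[Rmult/1]_(i < (size w).-1) ed M (swps m e w x) i by rewrite /pp size_swps.
rewrite Ex Ew Ex' Ew' !H0; try by apply: leq_ltn_trans Hex.
  rewrite Hprod // Hprod // Hsplit // (Hsplit w) //.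
  ring.
by apply: leq_ltn_trans Hew.
Qed.


Definition hidden (F : nat -> bool) (J i : nat) : bool := (i < J)%nat && ~~ F i.

Definition agree F (n J : nat) (x y : seq src) : bool :=
  all (fun i => hidden F J i || (nth A x i == nth A y i)) (iota 0 n.+1).

Lemma agreeP F n J x y :
  reflect (forall i, (i <= n)%nat -> hidden F J i || (nth A x i == nth A y i)) (agree F n J x y).
Proof.
apply: (iffP allP) => H i Hi.
  by apply: H; rewrite mem_iota /= add0n ltnS.
by apply: H; move: Hi; rewrite mem_iota /= add0n ltnS.
Qed.

Lemma tsum_le (T : finType) k (f g : seq T -> R) :
  (forall x, f x <= g x) -> tsum k f <= tsum k g.
Proof.
move=> H; rewrite /tsum; apply: (big_ind2 (fun a b => a <= b)) => //; first lra.
by move=> *; lra.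
Qed.

Lemma tsum_ge0 (T : finType) k (f : seq T -> R) :
  (forall x, 0 <= f x) -> 0 <= tsum k f.
Proof.
move=> H; rewrite /tsum; apply: (big_ind (fun a => 0 <= a)) => //; first lra.
by move=> *; lra.
Qed.

Lemma PU_tsum mu M F J u :
  PU mu M F J u = tsum J.+2 (fun l => if Uof F J l == u then pp mu M l else 0).
Proof. by rewrite /PU /rsum /tsum; apply: eq_bigr => x _; rewrite pathprobE. Qed.

Lemma PXU_tsum mu M F J z u :
  PXU mu M F J z u = tsum J.+2 (fun l => if (Uof F J l == u) && (nth A l J == z) then pp mu M l else 0).
Proof. by rewrite /PXU /rsum /tsum; apply: eq_bigr => x _; rewrite pathprobE. Qed.

Lemma ifmul (b : bool) p : (if b then p else 0) = p * (if b then 1 else 0).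
Proof. by case: b; ring. Qed.

Lemma Uof_take F J s k : (J.+2 <= k)%nat -> Uof F J (take k s) = Uof F J s.
Proof.
move=> Hk; have H := Fm_le F J; rewrite /Uof !nth_take //; lia.
Qed.

Lemma PU_marg mu M F (HM1 : forall x, M x A + M x B = 1) n J u : (J.+1 <= n)%nat ->
  tsum n.+1 (fun l => if Uof F J l == u then pp mu M l else 0) = PU mu M F J u.
Proof.
move=> HJ; rewrite PU_tsum.
rewrite /tsum (eq_bigr (fun x : n.+1.-tuple src => pp mu M x * (if Uof F J x == u then 1 else 0)));
  last by move=> x _; rewrite -ifmul.
rewrite [RHS](eq_bigr (fun x : J.+2.-tuple src => pp mu M x * (if Uof F J x == u then 1 else 0)));
  last by move=> x _; rewrite -ifmul.
apply: (@marg mu M HM1 n J.+1 (fun l => if Uof F J l == u then 1 else 0)) => //.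
by move=> s Hs; rewrite Uof_take.
Qed.

Definition Pb mu M F n J (y : seq src) : R :=
  tsum n.+1 (fun x => if agree F n J x y then pp mu M x else 0).

Lemma Pb_ge0 mu M F (Hmu0 : forall x, 0 <= mu x) (HM0 : forall x y, 0 <= M x y) n J y :
  0 <= Pb mu M F n J y.
Proof.
apply: tsum_ge0 => x; case: ifP => _; [exact: pp_ge0 | lra].
Qed.

Lemma Pb_bound mu M F (Hmu0 : forall x, 0 <= mu x) (HM0 : forall x y, 0 <= M x y)
  (HM1 : forall x, M x A + M x B = 1) n J J' y : (J.+1 <= n)%nat ->
  ~~ hidden F J' (Fminus F J) -> ~~ hidden F J' J.+1 ->
  Pb mu M F n J' y <= PU mu M F J (Uof F J y).
Proof.
move=> HJ H1 H2; rewrite -(@PU_marg mu M F HM1 n) //; apply: tsum_le => x.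
case: ifP => Hag; last by case: ifP => _; [exact: pp_ge0 | lra].
have -> : Uof F J x == Uof F J y.
  move/agreeP: Hag => Hag; rewrite /Uof.
  have E1 := Hag (Fminus F J); have E2 := Hag J.+1.
  rewrite (negPf H1) /= in E1; rewrite (negPf H2) /= in E2.
  rewrite (eqP (E1 _)); last by have := Fm_le F J; lia.
  by rewrite (eqP (E2 _)).
lra.
Qed.


Lemma hidden_S_on F J i : F J = true -> hidden F J.+1 i = hidden F J i.
Proof.
move=> HJ; rewrite /hidden ltnS leq_eqVlt; case: eqP => [->|] //=.
by rewrite HJ /= ltnn.
Qed.

Lemma agree_on F n J x y : F J = true -> agree F n J.+1 x y = agree F n J x y.
Proof. by move=> HJ; apply: eq_all => i; rewrite hidden_S_on. Qed.

Lemma agree_set F n J x y z : F J = false -> (J <= n)%nat ->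
  agree F n J x (set_nth A y J z) = agree F n J.+1 x y && (nth A x J == z).
Proof.
move=> HJ Hn; apply/agreeP/andP.
  move=> H; split; last first.
    by have := H J Hn; rewrite /hidden ltnn /= nth_set_nth /= eqxx.
  apply/agreeP => i Hi; have := H i Hi; rewrite nth_set_nth /=.
  case: (eqVneq i J) => [-> _|Hne]; first by rewrite /hidden ltnSn HJ.
  rewrite /hidden; case/orP => [/andP [H1 H2]|->]; last by rewrite orbT.
  by rewrite (ltn_trans H1 (ltnSn J)) H2.
move=> [/agreeP H /eqP Hz] i Hi; rewrite nth_set_nth /=.
case: (eqVneq i J) => [->|Hne]; first by rewrite Hz eqxx orbT.
have := H i Hi; rewrite /hidden; case/orP => [/andP [H1 H2]|->]; last by rewrite orbT.
rewrite H2 andbT; apply/orP; left; lia.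
Qed.

Lemma agree_swps F n J x w y : F J = false -> size x = n.+1 ->
  agree F n J.+1 (swps (Fminus F J) J.+1 x w) y = agree F n J.+1 x y.
Proof.
move=> HJ Hx; apply: eq_in_all => i; rewrite mem_iota add0n => /andP [_ Hi].
rewrite nth_swps Hx Hi.
case: (boolP (Fminus F J < i < J.+1)%nat) => //= /andP [H1 H2].
by rewrite /hidden H2 (Fm_off H1) //.
Qed.

Lemma tsum_mul (T : finType) k1 k2 (f g : seq T -> R) :
  tsum k1 f * tsum k2 g =
  \big[Rplus/0]_(p : k1.-tuple T * k2.-tuple T) (f p.1 * g p.2).
Proof.
rewrite /tsum big_distrl /= -(pair_bigA _ (fun (x : k1.-tuple T) (w : k2.-tuple T) => f x * g w)).
by apply: eq_bigr => x _; rewrite big_distrr.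
Qed.

Definition tswp (m e N : nat) (x : N.-tuple src) (w : seq src) : N.-tuple src :=
  @Tuple N src (swps m e x w) (introT eqP (etrans (size_swps m e x w) (size_tuple x))).

Lemma ifprod (a b : bool) p q :
  (if a then p else 0) * (if b then q else 0) = if a && b then p * q else 0.
Proof. by case: a; case: b => /=; ring. Qed.

Lemma Mlemma mu M F (HF0 : F 0%nat = true) n J y z :
  F J = false -> (J.+1 <= n)%nat ->
  Pb mu M F n J (set_nth A y J z) * PU mu M F J (Uof F J y) =
  Pb mu M F n J.+1 y * PXU mu M F J z (Uof F J y).
Proof.
move=> HJ Hn.
set m := Fminus F J.
have Hm : (m < J)%nat.
  rewrite ltn_neqAle Fm_le andbT; apply/eqP => E.
  by have := Fm_on HF0 J; rewrite -/m E HJ.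
rewrite PU_tsum PXU_tsum /Pb !tsum_mul.
pose phi := fun p : n.+1.-tuple src * J.+2.-tuple src =>
  (tswp m J.+1 p.1 p.2, tswp m J.+1 p.2 p.1).
have phiK : cancel phi phi.
  move=> [x w]; rewrite /phi /=; congr pair; apply: val_inj => /=; apply: swpsK.
    by rewrite size_tuple.
  by rewrite size_tuple; lia.
rewrite [RHS](reindex_inj (can_inj phiK)); apply: eq_bigr => [[x w]] _ /=.
rewrite !ifprod.
have Hx : size x = n.+1 by rewrite size_tuple.
have Hw : size w = J.+2 by rewrite size_tuple.
rewrite agree_swps //.
have -> : Uof F J (swps m J.+1 w x) = Uof F J w.
  rewrite /Uof -/m !nth_swps Hw.
  rewrite (_ : (m < J.+2)%nat = true); last by lia.
  rewrite ltnSn.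
  rewrite (_ : (m < m < J.+1)%nat = false); last by lia.
  by rewrite (_ : (m < J.+1 < J.+1)%nat = false); last by lia.
have -> : nth A (swps m J.+1 w x) J = nth A x J.
  rewrite nth_swps Hw (_ : (J < J.+2)%nat = true); last by lia.
  by rewrite Hm ltnSn.
rewrite agree_set //; last by lia.
case E1: (agree F n J.+1 x y) => //=.
case E2: (nth A x J == z); rewrite /= ?andbF //.
case E3: (Uof F J w == Uof F J y) => //=.
symmetry; apply: pp_swap; rewrite ?Hx ?Hw //; try lia.
  move/agreeP: E1 => E1; move/eqP: E3; rewrite /Uof => -[E3 _].
  rewrite E3; apply/eqP; have := E1 m; rewrite /hidden Fm_on //= andbF; apply.
  lia.
move/agreeP: E1 => E1; move/eqP: E3; rewrite /Uof => -[_ E3].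
rewrite E3; apply/eqP; have := E1 J.+1; rewrite /hidden ltnn /=; apply.
by [].
Qed.


Definition kk mu M F s (x : seq src) (q : query) : R :=
  kern mu M F s (Uof F s x) (nth A x s) q.
Definition Kp mu M F J (x : seq src) (qs : seq query) : R :=
  \big[Rmult/1]_(s < J) kk mu M F s x (nth None qs s).
Definition Ee mu M F J (qs : seq query) : R :=
  \big[Rmult/1]_(s < J) eq_ mu M F s (nth None qs s).
Definition V mu M F n J (y : seq src) (qs : seq query) : R :=
  tsum n.+1 (fun x => if agree F n J x y then pp mu M x * Kp mu M F J x qs else 0).

Lemma agree_Uof F n J J' x y : (J.+1 <= n)%nat ->
  ~~ hidden F J' (Fminus F J) -> ~~ hidden F J' J.+1 ->
  agree F n J' x y -> Uof F J x = Uof F J y.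
Proof.
move=> HJ H1 H2 /agreeP Hag; rewrite /Uof.
have E1 := Hag (Fminus F J); have E2 := Hag J.+1.
rewrite (negPf H1) /= in E1; rewrite (negPf H2) /= in E2.
rewrite (eqP (E1 _)); last by have := Fm_le F J; lia.
by rewrite (eqP (E2 _)).
Qed.

Lemma PXU_on mu M F J z u : F J = true ->
  PXU mu M F J z u = if z == u.1 then PU mu M F J u else 0.
Proof.
move=> HJ; rewrite PXU_tsum PU_tsum /tsum; case: eqP => [Ez|Ez].
  apply: eq_bigr => l _; case E: (Uof F J l == u) => //=.
  move/eqP: E; rewrite /Uof Fm_eq // => Eu; by rewrite Ez -Eu /= eqxx.
apply: big1 => l _; case E: (Uof F J l == u) => //=.
move/eqP: E; rewrite /Uof Fm_eq // => Eu.
by case: eqP => // E; case: Ez; rewrite -Eu.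
Qed.

Lemma tsum_split (T : finType) k (f g : seq T -> R) :
  tsum k (fun x => f x + g x) = tsum k f + tsum k g.
Proof. by rewrite /tsum big_split. Qed.

Lemma tsum_scal (T : finType) k (f : seq T -> R) c :
  tsum k (fun x => f x * c) = tsum k f * c.
Proof. by rewrite /tsum big_distrl. Qed.

Lemma tsum_ext (T : finType) k (f g : seq T -> R) :
  (forall x, size x = k -> f x = g x) -> tsum k f = tsum k g.
Proof. by move=> H; rewrite /tsum; apply: eq_bigr => x _; rewrite H // size_tuple. Qed.

Lemma main_claim mu M F (Hmu0 : forall x, 0 <= mu x) (HM0 : forall x y, 0 <= M x y)
  (HM1 : forall x, M x A + M x B = 1) (HF0 : F 0%nat = true) n J :
  (J <= n)%nat -> forall y qs,
  V mu M F n J y qs = Pb mu M F n J y * Ee mu M F J qs.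
Proof.
elim: J => [|J IH] HJn y qs.
  rewrite /V /Pb /Ee -tsum_scal big_ord0; apply: tsum_ext => x _.
  rewrite /Kp big_ord0; case: ifP => _; ring.
have IH' := IH (ltnW HJn).
set q := nth None qs J.
have EKp : forall x, Kp mu M F J.+1 x qs = Kp mu M F J x qs * kk mu M F J x q.
  by move=> x; rewrite /Kp big_ord_recr.
have EEe : Ee mu M F J.+1 qs = Ee mu M F J qs * eq_ mu M F J q.
  by rewrite /Ee big_ord_recr.
rewrite EEe.
case HJ: (F J).
-
  have EPb : Pb mu M F n J.+1 y = Pb mu M F n J y.
    by rewrite /Pb; apply: tsum_ext => x _; rewrite agree_on.
  have Hnh1 : ~~ hidden F J (Fminus F J) by rewrite Fm_eq // /hidden ltnn.
  have Hnh2 : ~~ hidden F J J.+1 by rewrite /hidden ltnNge leqnSn.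
  have EV : V mu M F n J.+1 y qs = V mu M F n J y qs * kk mu M F J y q.
    rewrite /V -tsum_scal; apply: tsum_ext => x _; rewrite agree_on //.
    case Hag: (agree F n J x y) => //; last by ring.
    rewrite EKp /kk (agree_Uof HJn Hnh1 Hnh2 Hag).
    have := Hag; move/agreeP => Hag'; have := Hag' J (ltnW HJn).
    rewrite /hidden ltnn /= => /eqP ->; ring.
  rewrite EV IH' EPb.
  have Hge := Pb_ge0 F Hmu0 HM0 n J y.
  case: (Req_dec (Pb mu M F n J y) 0) => HP0; first by rewrite HP0; ring.
  have HPU : 0 < PU mu M F J (Uof F J y).
    have := @Pb_bound mu M F Hmu0 HM0 HM1 n J J y HJn Hnh1 Hnh2; lra.
  have Hk := @kern_lemma mu M F Hmu0 HM0 J (Uof F J y) q HPU.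
  have Hpc : forall z, pcond mu M F J z (Uof F J y) = if z == nth A y J then 1 else 0.
    move=> z; rewrite /pcond PXU_on //.
    have -> : (Uof F J y).1 = nth A y J by rewrite /Uof Fm_eq.
    case: eqP => _; last by rewrite /Rdiv Rmult_0_l.
    by rewrite /Rdiv Rinv_r //; lra.
  rewrite !Hpc in Hk.
  rewrite /kk -Hk.
  by case: (nth A y J); rewrite /A /B /=; ring.
-
  set u := Uof F J y.
  have Hsplit : V mu M F n J.+1 y qs =
      V mu M F n J (set_nth A y J A) qs * kern mu M F J u A q +
      V mu M F n J (set_nth A y J B) qs * kern mu M F J u B q.
    rewrite /V -!tsum_scal -tsum_split; apply: tsum_ext => x _.
    have JLe := ltnW HJn; rewrite !agree_set //.
    case Hag: (agree F n J.+1 x y) => /=; last by ring.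
    have HU : Uof F J x = u.
      apply: (agree_Uof HJn _ _ Hag); first by rewrite /hidden Fm_on // andbF.
      by rewrite /hidden ltnn.
    rewrite EKp /kk HU.
    by case: (nth A x J); rewrite /A /B /=; ring.
  rewrite Hsplit !IH'.
  have HUz : forall z, Uof F J (set_nth A y J z) = u.
    move=> z; rewrite /u /Uof !nth_set_nth /=.
    have Hm : Fminus F J != J.
      by apply/eqP => E; have := Fm_on HF0 J; rewrite E HJ.
    by rewrite (negPf Hm) (_ : (J.+1 == J) = false) //; lia.
  have Hnh1 : forall J', ~~ hidden F J' (Fminus F J) by move=> J'; rewrite /hidden Fm_on // andbF.
  have HPUge := PU_ge0 F Hmu0 HM0 J u.
  case: (Rle_lt_or_eq_dec _ _ HPUge) => HPU; last first.
    have Hz : forall z, Pb mu M F n J (set_nth A y J z) = 0.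
      move=> z; have := @Pb_bound mu M F Hmu0 HM0 HM1 n J J (set_nth A y J z) HJn (Hnh1 J).
      rewrite HUz -/u -HPU /hidden ltnNge leqnSn /= => H.
      have := H isT; have := Pb_ge0 F Hmu0 HM0 n J (set_nth A y J z); lra.
    have H1 : Pb mu M F n J.+1 y = 0.
      have := @Pb_bound mu M F Hmu0 HM0 HM1 n J J.+1 y HJn (Hnh1 _).
      rewrite -/u -HPU /hidden ltnn /= => H.
      have := H isT; have := Pb_ge0 F Hmu0 HM0 n J.+1 y; lra.
    rewrite !Hz H1; ring.
  have HPz : forall z, Pb mu M F n J (set_nth A y J z) =
      Pb mu M F n J.+1 y * pcond mu M F J z u.
    move=> z; have := @Mlemma mu M F HF0 n J y z HJ HJn; rewrite -/u => HM.
    rewrite /pcond /Rdiv -Rmult_assoc -HM; field; lra.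
  rewrite !HPz -(@kern_lemma mu M F Hmu0 HM0 J u q HPU); ring.
Qed.


Lemma sum_query (f : query -> R) :
  \big[Rplus/0]_(q : query) f q = f (Some A) + f (Some B) + f None.
Proof.
rewrite (bigD1 None) //= (bigD1 (Some A)) //= (bigD1 (Some B)) //= big1.
  set a := f None; set b := f (Some A); set c := f (Some B).
  rewrite /= Rplus_0_r; ring.
by case => [[]|].
Qed.

Lemma tuple_prod (T : finType) (d : T) k (f : nat -> T -> R) :
  \big[Rplus/0]_(b : k.-tuple T) \big[Rmult/1]_(s < k) f s (nth d b s) =
  \big[Rmult/1]_(s < k) \big[Rplus/0]_(q : T) f s q.
Proof.
elim: k f => [|k IH] f.
  rewrite big_ord0; have := tsum0 (fun b : seq T => \big[Rmult/1]_(s < 0%nat) f s (nth d b s)).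
  by rewrite /tsum => ->; rewrite big_ord0.
have := @tsum_cons T k (fun b : seq T => \big[Rmult/1]_(s < k.+1) f s (nth d b s)).
rewrite /tsum => ->.
rewrite big_ord_recl.
rewrite (eq_bigr (fun a => f 0%nat a * \big[Rplus/0]_(x : k.-tuple T)
      \big[Rmult/1]_(s < k) f s.+1 (nth d x s))); last first.
  move=> a _; rewrite big_distrr /=; apply: eq_bigr => x _.
  by rewrite big_ord_recl.
rewrite -big_distrl /= (IH (fun s => f s.+1)); congr (_ * _); apply: eq_bigr => i _; by rewrite /bump leq0n add1n.
Qed.

Lemma rsum_pair (T1 T2 : finType) (f : T1 * T2 -> R) :
  rsum f = rsum (fun a => rsum (fun b => f (a, b))).
Proof.
rewrite /rsum (pair_bigA _ (fun a b => f (a, b))).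
by apply: eq_bigr => -[a b].
Qed.

Lemma pr_ext (T : finType) (P : T -> R) (E1 E2 : pred T) :
  (forall w, E1 w = E2 w) -> pr P E1 = pr P E2.
Proof. by move=> H; rewrite /pr /rsum; apply: eq_bigr => w _; rewrite H. Qed.

Lemma MI_zero (T T1 T2 : finType) (P : T -> R) (f : T -> T1) (g : T -> T2) :
  (forall a b, pr P (fun w => (f w == a) && (g w == b)) =
               pr P (fun w => f w == a) * pr P (fun w => g w == b)) ->
  MI P f g = 0.
Proof.
move=> H; rewrite /MI /rsum big1 // => a _; rewrite big1 // => b _ /=.
case: Rlt_dec => // Hp; rewrite -H /Rdiv Rinv_r; last lra.
by rewrite /= ln_1 Rmult_0_r.
Qed.

Lemma inB_hidden F t i : inB F t i = ~~ hidden F t.+1 i.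
Proof. by rewrite /inB /hidden negb_and negbK ltnS; case: (ltnP t i) => H; rewrite ?orbT ?orbF //=. Qed.

Lemma XB_agree F n t (x y : n.+1.-tuple src) :
  (XB F t x == XB F t y) = agree F n t.+1 x y.
Proof.
apply/eqP/agreeP.
  move=> H i Hi; have := congr1 (fun f : {ffun 'I_n.+1 -> option src} => f (Ordinal (Hi : (i < n.+1)%nat))) H.
  rewrite !ffunE /= inB_hidden; case: (hidden F t.+1 i) => //= -[->]; exact: eqxx.
move=> H; apply/ffunP => i; rewrite !ffunE inB_hidden.
case E: (hidden F t.+1 i) => //=.
have := H i; rewrite E /= -ltnS => /(_ (ltn_ord i)) /eqP ->; done.
Qed.


Lemma partition_sum (X Y : finType) (h : X -> Y) (Phi : pred Y) (g : X -> R) :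
  \big[Rplus/0]_(x : X) (if Phi (h x) then g x else 0) =
  \big[Rplus/0]_(a : Y) (if Phi a then \big[Rplus/0]_(x : X) (if h x == a then g x else 0) else 0).
Proof.
rewrite (eq_bigr (fun a => \big[Rplus/0]_(x : X) (if Phi a && (h x == a) then g x else 0)));
  last by move=> a _; case: (Phi a) => //=; rewrite big1.
rewrite exchange_big /=; apply: eq_bigr => x _.
rewrite (bigD1 (h x)) //= eqxx andbT big1; first by rewrite Rplus_0_r.
by move=> a /negPf Ha; rewrite eq_sym Ha andbF.
Qed.

Lemma sum_eq1 (T : finType) (b : T) (c : bool) (h : T -> R) :
  \big[Rplus/0]_(q : T) (if c && (q == b) then h q else 0) = if c then h b else 0.
Proof.
rewrite (bigD1 b) //= eqxx andbT big1; first by rewrite Rplus_0_r.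
by move=> q /negPf ->; rewrite andbF.
Qed.

Lemma KEY mu M F (Hmu0 : forall x, 0 <= mu x) (HM0 : forall x y, 0 <= M x y)
  (HM1 : forall x, M x A + M x B = 1) (HF0 : F 0%nat = true) t n :
  (t.+1 <= n)%nat -> forall (Phi : pred {ffun 'I_n.+1 -> option src}) qs,
  \big[Rplus/0]_(x : n.+1.-tuple src)
     (if Phi (XB F t x) then pp mu M x * Kp mu M F t.+1 x qs else 0) =
  (\big[Rplus/0]_(x : n.+1.-tuple src) (if Phi (XB F t x) then pp mu M x else 0))
     * Ee mu M F t.+1 qs.
Proof.
move=> Htn Phi qs.
rewrite (partition_sum (fun x : n.+1.-tuple src => XB F t x)) /=.
rewrite [X in X * _](partition_sum (fun x : n.+1.-tuple src => XB F t x)) /= big_distrl /=.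
apply: eq_bigr => a _; case: (Phi a); last by rewrite Rmult_0_l.
case: (pickP (fun y : n.+1.-tuple src => XB F t y == a)) => [y /eqP Hy|Hn].
  rewrite -Hy.
  have := @main_claim mu M F Hmu0 HM0 HM1 HF0 n t.+1 Htn y qs.
  rewrite /V /Pb /tsum => E.
  rewrite (eq_bigr (fun x : n.+1.-tuple src =>
     if agree F n t.+1 x y then pp mu M x * Kp mu M F t.+1 x qs else 0)); last first.
    by move=> x _; rewrite XB_agree.
  rewrite E; congr (_ * _); apply: eq_bigr => x _; by rewrite XB_agree.
rewrite !big1 ?Rmult_0_l // => x _; by rewrite Hn.
Qed.

Lemma Ptot mu M (HM1 : forall x, M x A + M x B = 1) (Hmu1 : mu A + mu B = 1) n :
  \big[Rplus/0]_(x : n.+1.-tuple src) pp mu M x = 1.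
Proof.
have := @marg mu M HM1 n 0%nat (fun _ => 1) (leq0n n) (fun _ _ => erefl).
rewrite /tsum => E.
transitivity (tsum 1 (pp mu M)); last exact: tsum_ptot.
rewrite /tsum.
rewrite (eq_bigr (fun x : n.+1.-tuple src => pp mu M x * 1)); last by move=> *; rewrite Rmult_1_r.
rewrite E; apply: eq_bigr => *; by rewrite Rmult_1_r.
Qed.

Lemma sum_eq_ mu M F (Hmu0 : forall x, 0 <= mu x) (HM0 : forall x y, 0 <= M x y) s :
  \big[Rplus/0]_(q : query) eq_ mu M F s q = 1.
Proof. rewrite sum_query /=; ring. Qed.

Lemma SumEe mu M F (Hmu0 : forall x, 0 <= mu x) (HM0 : forall x y, 0 <= M x y) k :
  \big[Rplus/0]_(qs : k.-tuple query) Ee mu M F k qs = 1.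
Proof.
rewrite /Ee (tuple_prod None k (fun s q => eq_ mu M F s q)).
by rewrite big1 // => s _; rewrite (sum_eq_ F Hmu0 HM0).
Qed.


Lemma PjointE mu M F n t (w : Omega n t) :
  Pjoint mu M F w = pp mu M w.1 * Kp mu M F t.+1 w.1 w.2.
Proof. by rewrite /Pjoint pathprobE. Qed.

Definition cPhi mu M F t n (Phi : pred {ffun 'I_n.+1 -> option src}) : R :=
  \big[Rplus/0]_(x : n.+1.-tuple src) (if Phi (XB F t x) then pp mu M x else 0).

Lemma prA mu M F (Hmu0 : forall x, 0 <= mu x) (HM0 : forall x y, 0 <= M x y)
  (HM1 : forall x, M x A + M x B = 1) (HF0 : F 0%nat = true) t n :
  (t.+1 <= n)%nat -> forall Phi (b : t.+1.-tuple query),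
  pr (Pjoint mu M F (n := n) (t := t)) (fun w => Phi (XB F t w.1) && (w.2 == b)) =
  cPhi mu M F t Phi * Ee mu M F t.+1 b.
Proof.
move=> Htn Phi b; rewrite /pr rsum_pair /rsum /cPhi.
rewrite -(@KEY mu M F Hmu0 HM0 HM1 HF0 t n Htn Phi b).
apply: eq_bigr => x _ /=; rewrite (sum_eq1 b (Phi (XB F t x)) (fun i => Pjoint mu M F (x, i))) PjointE //.
Qed.

Lemma prB mu M F (Hmu0 : forall x, 0 <= mu x) (HM0 : forall x y, 0 <= M x y)
  (HM1 : forall x, M x A + M x B = 1) (HF0 : F 0%nat = true) t n :
  (t.+1 <= n)%nat -> forall Phi,
  pr (Pjoint mu M F (n := n) (t := t)) (fun w => Phi (XB F t w.1)) = cPhi mu M F t Phi.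
Proof.
move=> Htn Phi; rewrite /pr rsum_pair /rsum exchange_big /=.
rewrite (eq_bigr (fun qs : t.+1.-tuple query => cPhi mu M F t Phi * Ee mu M F t.+1 qs)).
  by rewrite -big_distrr /= (SumEe F Hmu0 HM0) Rmult_1_r.
move=> qs _; rewrite /cPhi -(@KEY mu M F Hmu0 HM0 HM1 HF0 t n Htn Phi qs).
by apply: eq_bigr => x _; rewrite PjointE.
Qed.

Lemma cPhiT mu M F (HM1 : forall x, M x A + M x B = 1) (Hmu1 : mu A + mu B = 1) t n :
  cPhi mu M F t (fun _ : {ffun 'I_n.+1 -> option src} => true) = 1.
Proof. by rewrite /cPhi -(@Ptot mu M HM1 Hmu1 n); apply: eq_bigr. Qed.

Lemma prIndep mu M F (Hmu0 : forall x, 0 <= mu x) (Hmu1 : mu A + mu B = 1)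
  (HM0 : forall x y, 0 <= M x y)
  (HM1 : forall x, M x A + M x B = 1) (HF0 : F 0%nat = true) t n :
  (t.+1 <= n)%nat -> forall Phi (b : t.+1.-tuple query),
  pr (Pjoint mu M F (n := n) (t := t)) (fun w => Phi (XB F t w.1) && (w.2 == b)) =
  pr (Pjoint mu M F (n := n) (t := t)) (fun w => Phi (XB F t w.1)) *
  pr (Pjoint mu M F (n := n) (t := t)) (fun w => w.2 == b).
Proof.
move=> Htn Phi b.
rewrite (@prA mu M F Hmu0 HM0 HM1 HF0 t n Htn) (@prB mu M F Hmu0 HM0 HM1 HF0 t n Htn).
rewrite (@pr_ext _ _ (fun w : Omega n t => w.2 == b) (fun w => (fun _ => true) (XB F t w.1) && (w.2 == b))) //.
rewrite (@prA mu M F Hmu0 HM0 HM1 HF0 t n Htn (fun _ => true) b) (@cPhiT mu M F HM1 Hmu1 t n); ring.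
Qed.

Lemma margQ mu M F (Hmu0 : forall x, 0 <= mu x) (Hmu1 : mu A + mu B = 1)
  (HM0 : forall x y, 0 <= M x y)
  (HM1 : forall x, M x A + M x B = 1) (HF0 : F 0%nat = true) t n :
  (t.+1 <= n)%nat -> forall g : query -> R,
  rsum (fun w : Omega n t => Pjoint mu M F w * g (nth None w.2 t)) =
  \big[Rplus/0]_(q : query) (eq_ mu M F t q * g q).
Proof.
move=> Htn g; rewrite rsum_pair /rsum exchange_big /=.
rewrite (eq_bigr (fun qs : t.+1.-tuple query =>
   \big[Rmult/1]_(s < t.+1) (if s == t :> nat then eq_ mu M F s (nth None qs s) * g (nth None qs s)
                            else eq_ mu M F s (nth None qs s)))).
  rewrite (tuple_prod None t.+1 (fun s q => if s == t :> nat then eq_ mu M F s q * g q else eq_ mu M F s q)).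
  rewrite big_ord_recr /= eqxx big1 ?Rmult_1_l //.
  move=> s _; rewrite (_ : (widen_ord (leqnSn t) s == t :> nat) = false) /=; last first.
    by apply/negbTE; rewrite neq_ltn ltn_ord.
  exact: (sum_eq_ F Hmu0 HM0).
move=> qs _.
have := @KEY mu M F Hmu0 HM0 HM1 HF0 t n Htn (fun _ => true) qs.
rewrite -/(cPhi mu M F t (fun _ => true)) (@cPhiT mu M F HM1 Hmu1 t n) Rmult_1_l /= => HK.
rewrite -big_distrl /= (eq_bigr (fun x : n.+1.-tuple src => pp mu M x * Kp mu M F t.+1 x qs)).
  rewrite HK [RHS]big_ord_recr /= eqxx /Ee big_ord_recr /=.
  rewrite Rmult_assoc; congr (_ * _); apply: eq_bigr => s _.
  by rewrite ifF //; apply/negbTE; rewrite neq_ltn ltn_ord.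
by move=> x _; rewrite PjointE.
Qed.


Definition hU F n t (v : {ffun 'I_n.+1 -> option src}) : src * src :=
  (odflt A (v (inord (Fminus F t))), odflt A (v (inord t.+1))).

Lemma Uof_hU F (HF0 : F 0%nat = true) n t : (t.+1 <= n)%nat -> forall (x : n.+1.-tuple src),
  Uof F t x = hU F t (XB F t x).
Proof.
move=> Htn x; have Hle := Fm_le F t.
rewrite /hU !ffunE !inordK; try lia.
rewrite /inB Hle Fm_on // ltnSn orbT /=.
by rewrite /Uof.
Qed.

Local Close Scope R_scope.

Theorem mainTheorem2 (mu : src -> R) (M : src -> src -> R) (F : nat -> bool)
  (Hmu0 : forall x, (0 <= mu x)%R) (Hmu1 : (mu A + mu B = 1)%R)
  (HM0 : forall x y, (0 <= M x y)%R) (HM1 : forall x, (M x A + M x B = 1)%R)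
  (HF0 : F 0%N = true) :
  forall t n : nat, (t.+1 <= n)%N ->
  let P := Pjoint mu M F (n := n) (t := t) in
  [/\ (* decodability: X_t in Q_t almost surely *)
      pr P (fun w => ~~ in_query (nth A w.1 t) (nth None w.2 t)) = 0%R,
      (* P(|Q_t| = 1) = pi_t(A) + pi_t(B) *)
      pr P (fun w => qsize (nth None w.2 t) == 1%N)
        = (pi_t mu M F t A + pi_t mu M F t B)%R,
      (* E|Q_t| = 2 - pi_t(A) - pi_t(B) *)
      expect P (fun w => INR (qsize (nth None w.2 t)))
        = (2 - pi_t mu M F t A - pi_t mu M F t B)%R,
      (* I(U_t; Q_0..Q_t) = 0 *)
      MI P (fun w => Uof F t w.1) (fun w => w.2) = 0%R &
      (* privacy: I(X_{B_t}; Q_0..Q_t) = 0 (all coordinates up to horizon n) *)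
      MI P (fun w => XB F t w.1) (fun w => w.2) = 0%R].
Proof.
move=> t n Htn P; split.
- rewrite /pr /rsum big1 // => w _; case: ifP => // Hc.
  rewrite /P PjointE /Kp big_ord_recr /= /kk.
  move: Hc; case: (nth None w.2 t) => [y|] //= Hc.
  rewrite /kern (negbTE Hc); ring.
- rewrite /pr.
  have -> : rsum (fun w : Omega n t => if qsize (nth None w.2 t) == 1%N then P w else 0%R) =
            rsum (fun w : Omega n t => (P w * (fun q : query => if qsize q == 1%nat then 1 else 0) (nth None w.2 t))%R).
    by rewrite /rsum; apply: eq_bigr => w _; rewrite ifmul.
  rewrite /P (@margQ mu M F Hmu0 Hmu1 HM0 HM1 HF0 t n Htn (fun q : query => if qsize q == 1%nat then 1%R else 0%R)) sum_query /=; ring.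
- rewrite /expect /P (@margQ mu M F Hmu0 Hmu1 HM0 HM1 HF0 t n Htn (fun q : query => INR (qsize q))) sum_query /=; ring.
- apply: MI_zero => a b.
  rewrite (@pr_ext _ _ _ (fun w : Omega n t => (fun v => hU F t v == a) (XB F t w.1) && (w.2 == b)));
    last by move=> w; rewrite (Uof_hU HF0 Htn).
  rewrite (@prIndep mu M F Hmu0 Hmu1 HM0 HM1 HF0 t n Htn (fun v => hU F t v == a) b).
  congr (Rmult _ _); apply: pr_ext => w; by rewrite (Uof_hU HF0 Htn).
- apply: MI_zero => a b.
  exact: (@prIndep mu M F Hmu0 Hmu1 HM0 HM1 HF0 t n Htn (fun v => v == a) b).
Qed.
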